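(* Consider the following network, in which every edge has capacity $2$. - Two inputs $s_1,s_2$ and two outputs $t_1,t_2$. - Four vertices $a,b,p,q$. - Edges: - $s_1$–$a$, $a$–$p$, $p$–$t_1$; - $s_2$–$b$, $b$–$q$, $q$–$t_2$; - two ''diagonal'' edges $a$–$q$ and $b$–$p$. Local orderings $L_1$: - at $a$: $1=(s_1a)$, $2=(ap)$, $3=(aq)$; - at $b$: $1=(s_2b)$, $2=(bq)$, $3=(bp)$; - at $p$: $1=(pt_1)$, $2=(bp)$, $3=(ap)$; - at $q$: $1=(qt_2)$, $2=(aq)$, $3=(bq)$. All four vertices have valence type $(2,2,2)$, so a Version II assignment is a single tensor $\mathcal T\in(\mathbb{C}^2)^{\otimes3}$ placed at every vertex according to $L_1$. Then for every such $\mathcal T$ the resulting map $\beta(G,c,L_1;\mathcal T):\mathbb{C}^2\otimes\mathbb{C}^2\to\mathbb{C}^2\otimes\mathbb{C}^2$ has rank at most $3$. Hence $\mathrm{QMF}(G,c,L_1)\le3<4=\mathrm{QMC}(G,c)$.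
   Context: A tensor network template $(G,c)$ consists of a finite undirected graph $G$ with edge set $E$ whose vertex set is partitioned as $S\sqcup T\sqcup V$. Every element of $S$ (inputs) and every element of $T$ (outputs) is an open end of degree $1$; the elements of $V$ are called vertices. For $u\in S\sqcup T$, $e(u)$ denotes the edge incident to $u$. A capacity function $c:E\to\mathbb{Z}_{>0}$ is given, and to each edge $e$ one associates $\mathbb{C}^{c_e}$ with a fixed basis. A local ordering $L$ fixes, at each vertex $v$ of degree $d_v$, an ordering $e(v,1),\dots,e(v,d_v)$ of the incident edge-ends. Given a tensor $\mathcal T_v\in\bigotimes_{i=1}^{d_v}\mathbb{C}^{c_{e(v,i)}}$ at each vertex, let $V_S=\bigotimes_{u\in S}\mathbb{C}^{c_{e(u)}}$ and $V_T=\bigotimes_{u\in T}\mathbb{C}^{c_{e(u)}}$. Contracting the network along all edges gives $\beta\in\mathrm{Hom}(V_S,V_T)$, whose matrix entries are $\langle I_T|\beta|I_S\rangle=\sum_W\prod_{v\in V}(\mathcal T_v)_{W|_v}$. Here $W$ ranges over all assignments of basis indices to all edges that agree with $I_S$ on input edges and $I_T$ on output edges, and $W|_v$ is the tuple of indices on $e(v,1),\dots,e(v,d_v)$, so that the $i$-th tensor index at $v$ is contracted with edge $e(v,i)$. Version II: the valence type of $v$ is the sequence $B_v=(c_{e(v,1)},\dots,c_{e(v,d_v)})$. A Version II assignment chooses one tensor $\mathcal T_B\in\bigotimes_i\mathbb{C}^{m_i}$ for each valence type $B=(m_1,\dots,m_k)$ occurring, and places $\mathcal T_{B_v}$ at each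 vertex $v$. The result is denoted $\beta(G,c,L;\mathcal T)$, and $\mathrm{QMF}(G,c,L)$ is its maximal rank over all Version II assignments. An edge cut set is a set $C\subseteq E$ for which there is a partition $S\sqcup T\sqcup V=\bar S\sqcup\bar T$ with $S\subseteq\bar S$, $T\subseteq\bar T$, and $C$ equal to the set of edges having one endpoint in $\bar S$ and the other in $\bar T$. The quantum min-cut is $\mathrm{QMC}(G,c)=\min_C\prod_{e\in C}c_e$, the minimum taken over all edge cut sets $C$. *)

(* Defs.v *)
From HB Require Import structures.
From mathcomp Require Import all_boot all_order all_algebra.
Set Implicit Arguments. Unset Strict Implicit. Unset Printing Implicit Defensive.
Import Order.TTheory GRing.Theory Num.Theory.

Definition nS1 := 0%N.  Definition nS2 := 1%N.
Definition nT1 := 2%N.  Definition nT2 := 3%N.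
Definition nA := 4%N.   Definition nB := 5%N.
Definition nP := 6%N.   Definition nQ := 7%N.

(* Edges (numbered 0..7), given by their endpoints:
   e0 = s1a, e1 = ap, e2 = pt1, e3 = s2b, e4 = bq, e5 = qt2, e6 = aq, e7 = bp *)
Definition edges : seq (nat * nat) :=
  [:: (nS1, nA); (nA, nP); (nP, nT1); (nS2, nB); (nB, nQ); (nQ, nT2);
      (nA, nQ); (nB, nP)].

Definition edge_ends (e : 'I_8) : nat * nat := nth (0%N, 0%N) edges e.

Definition cap (e : 'I_8) : nat := 2.

Definition e_s1 : 'I_8 := inord 0.  Definition e_s2 : 'I_8 := inord 3.
Definition e_t1 : 'I_8 := inord 2.  Definition e_t2 : 'I_8 := inord 5.

Definition vertices : seq nat := [:: nA; nB; nP; nQ].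

(* Local ordering L1: the edges e(v,1), e(v,2), e(v,3) at each vertex.
   a: (s1a, ap, aq); b: (s2b, bq, bp); p: (pt1, bp, ap); q: (qt2, aq, bq). *)
Definition L1 (v : nat) : nat * nat * nat :=
  if v == nA then (0, 1, 6)%N
  else if v == nB then (3, 4, 7)%N
  else if v == nP then (2, 7, 1)%N
  else (5, 6, 4)%N.

Definition contraction (C : nzRingType) (T : 'I_2 -> 'I_2 -> 'I_2 -> C)
    (iS1 iS2 iT1 iT2 : 'I_2) : C :=
  (\sum_(W : {ffun 'I_8 -> 'I_2} |
          [&& W e_s1 == iS1, W e_s2 == iS2, W e_t1 == iT1 & W e_t2 == iT2])
     \prod_(v <- vertices)
        let: (x, y, z) := L1 v in T (W (inord x)) (W (inord y)) (W (inord z)))%R.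

(* Rows = output basis I_T = (t1,t2), columns = input basis I_S = (s1,s2). *)
Definition beta (C : nzRingType) (T : 'I_2 -> 'I_2 -> 'I_2 -> C)
    : 'M[C]_(2 * 2, 2 * 2) :=
  \matrix_(r < 2 * 2, k < 2 * 2)
     contraction T (inord (k %/ 2)) (inord (k %% 2))
                   (inord (r %/ 2)) (inord (r %% 2)).

(* A partition S u T u V = Sbar u Tbar with S in Sbar, T in Tbar is given by
   the set Sbar of nodes; its cut set is the set of crossing edges. *)
Definition admissible (X : {set 'I_8}) : bool :=
  [&& (inord nS1 \in X), (inord nS2 \in X),
      (inord nT1 \notin X) & (inord nT2 \notin X)].

Definition crossing (X : {set 'I_8}) (e : 'I_8) : bool :=
  (inord (edge_ends e).1 \in X) != (inord (edge_ends e).2 \in X).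

Definition cut_value (X : {set 'I_8}) : nat :=
  (\prod_(e : 'I_8 | crossing X e) cap e)%N.

(* QMC(G,c) = min over cut sets of the product of capacities.  The seed of
   the min is the product of all capacities, an upper bound of every cut. *)
Definition QMC : nat :=
  \big[minn/(\prod_(e : 'I_8) cap e)%N]_(X : {set 'I_8} | admissible X)
     cut_value X.

(* Main.v *)
Require Import Defs.
From HB Require Import structures.
From mathcomp Require Import all_boot all_order all_algebra.
From mathcomp Require Import ring.
Import GRing.Theory.
Local Open Scope ring_scope.
Section C.
Variable (C : comNzRingType) (T : 'I_2 -> 'I_2 -> 'I_2 -> C).

Definition S4 (x y u w : 'I_2) : C :=
  \sum_(p : ('I_2 * 'I_2) * ('I_2 * 'I_2))
     T x p.1.1 p.2.1 * T y p.1.2 p.2.2 * T u p.2.2 p.1.1 * T w p.2.1 p.1.2.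

Lemma S4nest x y u w : S4 x y u w =
  \sum_(a < 2) \sum_(b < 2) \sum_(g < 2) \sum_(d < 2)
     T x a g * T y b d * T u d a * T w g b.
Proof.
rewrite /S4 -(pair_bigA _ (fun ab gd : 'I_2 * 'I_2 =>
   T x ab.1 gd.1 * T y ab.2 gd.2 * T u gd.2 ab.1 * T w gd.1 ab.2)) /=.
rewrite -(pair_bigA _ (fun a b => \sum_(gd : 'I_2 * 'I_2)
   (T x a gd.1 * T y b gd.2 * T u gd.2 a * T w gd.1 b))) /=.
apply: eq_bigr => a _; apply: eq_bigr => b _.
by rewrite -(pair_bigA _ (fun g d => T x a g * T y b d * T u d a * T w g b)).
Qed.

Lemma I2cases (i : 'I_2) : i = ord0 \/ i = lift ord0 ord0.
Proof. case: i => [[|[|//]] ?]; [left|right]; exact: val_inj. Qed.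

Lemma S4sym x y : S4 x y ord0 (lift ord0 ord0) = S4 x y (lift ord0 ord0) ord0.
Proof.
rewrite !S4nest !big_ord_recl !big_ord0 /=.
by case: (I2cases x) => ->; case: (I2cases y) => ->; ring.
Qed.
Lemma contrE x y u w : contraction T x y u w = S4 x y u w.
Proof.
rewrite /contraction /S4.
pose h := fun p : ('I_2 * 'I_2) * ('I_2 * 'I_2) =>
  [ffun e : 'I_8 => nth x [:: x; p.1.1; u; y; p.1.2; w; p.2.1; p.2.2] e].
pose h' := fun W : {ffun 'I_8 -> 'I_2} =>
  ((W (inord 1), W (inord 4)), (W (inord 6), W (inord 7))).
rewrite (reindex_onto h h').
  apply: eq_big.
    move=> [[a b] [g d]]; rewrite /h /h' /e_s1 /e_s2 /e_t1 /e_t2 !ffunE !inordK //=.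
    by rewrite !eqxx.
  move=> [[a b] [g d]] _; rewrite /vertices !big_cons big_nil /L1 /= /h !ffunE !inordK //=.
  by rewrite mulr1 -!mulrA.
move=> W /and4P [/eqP H0 /eqP H3 /eqP H2 /eqP H5].
apply/ffunP => e; rewrite /h /h' ffunE /=.
case: e => [[|[|[|[|[|[|[|[|//]]]]]]]] ?] /=.
- by rewrite -H0 /e_s1; congr (W _); apply/val_inj; rewrite /= inordK.
- by congr (W _); apply/val_inj; rewrite /= inordK.
- by rewrite -H2 /e_t1; congr (W _); apply/val_inj; rewrite /= inordK.
- by rewrite -H3 /e_s2; congr (W _); apply/val_inj; rewrite /= inordK.
- by congr (W _); apply/val_inj; rewrite /= inordK.
- by rewrite -H5 /e_t2; congr (W _); apply/val_inj; rewrite /= inordK.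
- by congr (W _); apply/val_inj; rewrite /= inordK.
- by congr (W _); apply/val_inj; rewrite /= inordK.
Qed.
End C.
Lemma rank_eqrow (F : fieldType) (A : 'M[F]_(2*2, 2*2)) :
  (forall j, A (inord 1) j = A (inord 2) j) -> (\rank A <= 3)%N.
Proof.
move=> Hrow.
pose R : 'M[F]_(3, 2*2) := \matrix_(i, j) A (inord (nth 0%N [:: 0; 1; 3]%N i)) j.
pose Sm : 'M[F]_(2*2, 3) := \matrix_(i, k) ((k : nat) == nth 0%N [:: 0; 1; 1; 2]%N i)%:R.
have -> : A = Sm *m R.
  apply/matrixP => i j; rewrite !mxE !big_ord_recl big_ord0 !mxE /=.
  case: i => [[|[|[|[|//]]]] Hi] /=;
    rewrite ?mul1r ?mul0r ?addr0 ?add0r.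
  - by congr (A _ _); apply: val_inj; rewrite /= inordK.
  - by congr (A _ _); apply: val_inj; rewrite /= inordK.
  - transitivity (A (inord 2) j); first by congr (A _ _); apply: val_inj; rewrite /= inordK.
    by rewrite -Hrow; congr (A _ _); apply: val_inj; rewrite /= !inordK.
  - by congr (A _ _); apply: val_inj; rewrite /= inordK.
exact: leq_trans (mxrankM_maxr _ _) (rank_leq_row _).
Qed.
Lemma cut_ge4 X : admissible X -> (4 <= cut_value X)%N.
Proof.
rewrite /admissible /cut_value big_mkcond /= !big_ord_recl big_ord0 /crossing /edge_ends /= /cap.
case: (inord nS1 \in X) => //; case: (inord nS2 \in X) => //;
case: (inord nT1 \in X) => //; case: (inord nT2 \in X) => //.
by case: (inord nA \in X); case: (inord nB \in X); case: (inord nP \in X); case: (inord nQ \in X).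
Qed.

Definition X0 : {set 'I_8} := [set inord nS1; inord nS2].

Lemma X0adm : admissible X0.
Proof. by rewrite /admissible /X0 !inE -!val_eqE /= !inordK. Qed.

Lemma X0cut : cut_value X0 = 4%N.
Proof.
rewrite /cut_value big_mkcond /= !big_ord_recl big_ord0 /crossing /edge_ends /= /cap.
by rewrite /X0 !inE -!val_eqE /= !inordK.
Qed.

Lemma bigmin_le (r : seq {set 'I_8}) (P : pred {set 'I_8}) F x0 j :
  j \in r -> P j -> (\big[minn/x0]_(i <- r | P i) F i <= F j)%N.
Proof.
elim: r => [//|i r IH]; rewrite inE big_cons => /orP [/eqP -> Pj|jr Pj].
  by rewrite Pj geq_minl.
case: (P i); last exact: IH.
exact: leq_trans (geq_minr _ _) (IH jr Pj).
Qed.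

Lemma QMC4 : QMC = 4%N.
Proof.
apply/eqP; rewrite eqn_leq; apply/andP; split.
  rewrite -X0cut; apply: bigmin_le; [exact: mem_index_enum | exact: X0adm].
apply: (big_ind (fun n => 4 <= n)%N).
- by rewrite /cap prod_nat_const card_ord.
- by move=> a b Ha Hb; rewrite leq_min Ha Hb.
- exact: cut_ge4.
Qed.

Theorem mainTheorem10 :
  (forall (C : numClosedFieldType) (T : 'I_2 -> 'I_2 -> 'I_2 -> C),
      (\rank (beta T) <= 3)%N) /\ QMC = 4%N.
Proof.
split; last exact: QMC4.
move=> C T; apply: rank_eqrow => j; rewrite !mxE !inordK //= !contrE.
have E0 : inord 0 = ord0 :> 'I_2 by apply: val_inj; rewrite /= inordK.
have E1 : inord 1 = lift ord0 ord0 :> 'I_2 by apply: val_inj; rewrite /= inordK.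
by rewrite E0 E1 S4sym.
Qed.
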